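(* Let $(P,\lambda)$ be a marked poset which is strict and irredundant. For every $p\in P\setminus P^*$, the equation $x_p=0$ defines a facet of the marked chain polytope $\mathcal{C}(P,\lambda)$. Moreover, $0$ is a vertex of $\mathcal{C}(P,\lambda)$.
   Context: A marked poset $(P,\lambda)$ is a finite poset $(P,\preceq)$ together with an induced subposet $P^*\subseteq P$ of marked elements and an order-preserving marking $\lambda:P^*\to\mathbb{R}$; it is always assumed that all minimal and all maximal elements of $P$ lie in $P^*$. It is strict if $\lambda(a)<\lambda(b)$ whenever $a\prec b$ in $P^*$, and irredundant (regular) if for every covering relation $p\prec q$ in $P$ and all $a,b\in P^*$ with $a\preceq q$ and $p\preceq b$, one has $a=b$ or $\lambda(a)<\lambda(b)$. The marked chain polytope $\mathcal{C}(P,\lambda)$ is the set of all $x\in\mathbb{R}_{\ge0}^{P\setminus P^*}$ with $x_{p_1}+\dots+x_{p_k}\le\lambda(b)-\lambda(a)$ for every maximal chain $a\prec p_1\prec\cdots\prec p_k\prec b$ in $P$ with $a,b\in P^*$ and $p_1,\dots,p_k\in P\setminus P^*$. *)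

(* Defs.v *)
From HB Require Import structures.
From mathcomp Require Import all_boot all_order all_algebra.
Set Implicit Arguments. Unset Strict Implicit. Unset Printing Implicit Defensive.
Import Order.TTheory GRing.Theory Num.Theory.
Local Open Scope ring_scope.

Section Polyhedral.
Variables (R : realFieldType) (I : finType).

(* points y_0..y_(k-1), x0 are affinely independent around x0:
   the differences y_j - x0 are linearly independent *)
Definition lin_indep k (v : 'I_k -> I -> R) : Prop :=
  forall c : 'I_k -> R, (forall i, \sum_(j < k) c j * v j i = 0) -> forall j, c j = 0.

Definition affdim_ge (S : (I -> R) -> Prop) (d : nat) : Prop :=
  exists (x0 : I -> R) (y : 'I_d -> I -> R),
    [/\ S x0, forall j, S (y j) & lin_indep (fun j i => y j i - x0 i)].

Definition affdim (S : (I -> R) -> Prop) (d : nat) : Prop :=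
  affdim_ge S d /\ ~ affdim_ge S d.+1.

Definition is_face (C F : (I -> R) -> Prop) : Prop :=
  exists (c : I -> R) (c0 : R),
    (forall x, C x -> \sum_i c i * x i <= c0) /\
    (forall x, F x <-> (C x /\ \sum_i c i * x i = c0)).

Definition is_facet (C F : (I -> R) -> Prop) : Prop :=
  is_face C F /\ exists d, affdim C d.+1 /\ affdim F d.

Definition is_vertex (C : (I -> R) -> Prop) (v : I -> R) : Prop :=
  is_face C (fun x => x = v).

End Polyhedral.

Section Marked.
Variables (R : realFieldType) (disp : Order.disp_t) (T : finPOrderType disp).
Variables (Pstar : {set T}) (lam : T -> R).

Definition covers (p q : T) : bool :=
  (p < q)%O && [forall r : T, ~~ ((p < r)%O && (r < q)%O)].

Definition minimal (p : T) : Prop := forall q : T, (q <= p)%O -> q = p.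
Definition maximal (p : T) : Prop := forall q : T, (p <= q)%O -> q = p.

Definition marked_poset : Prop :=
  [/\ forall p, minimal p -> p \in Pstar,
      forall p, maximal p -> p \in Pstar &
      forall a b, a \in Pstar -> b \in Pstar -> (a <= b)%O -> lam a <= lam b].

Definition strict_marked : Prop :=
  forall a b, a \in Pstar -> b \in Pstar -> (a < b)%O -> lam a < lam b.

Definition irredundant : Prop :=
  forall p q, covers p q -> forall a b, a \in Pstar -> b \in Pstar ->
    (a <= q)%O -> (p <= b)%O -> a = b \/ lam a < lam b.

Definition unmarked := {p : T | p \notin Pstar}.

(* marked chain polytope C(P, lam) in R^(P \ P* ) ; saturated chains
   a ⋖ p1 ⋖ ... ⋖ pk ⋖ b with a, b marked and the p_i unmarked *)
Definition marked_chain_polytope (x : unmarked -> R) : Prop :=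
  (forall p, 0 <= x p) /\
  (forall (a b : T) (s : seq unmarked), a \in Pstar -> b \in Pstar ->
     path covers a (rcons (map val s) b) ->
     \sum_(p <- s) x p <= lam b - lam a).

End Marked.

Arguments marked_chain_polytope {R disp T} Pstar lam x.
Arguments unmarked {disp T} Pstar.
Arguments marked_poset {R disp T} Pstar lam.
Arguments strict_marked {R disp T} Pstar lam.
Arguments irredundant {R disp T} Pstar lam.
Arguments is_facet {R I} C F.
Arguments is_vertex {R I} C v.

(* Main.v *)
Require Import Defs.
From HB Require Import structures.
From mathcomp Require Import all_boot all_order all_algebra.
From Stdlib Require Import FunctionalExtensionality.
Import Order.TTheory GRing.Theory Num.Theory.
Local Open Scope ring_scope.

Section Lin.
Variables (R : realFieldType) (I : finType).

Lemma dep_lemma k (v : 'I_k -> I -> R) (J : {set I}) :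
  (#|J| < k)%N -> (forall j i, i \notin J -> v j i = 0) -> ~ lin_indep v.
Proof.
move=> ltJ vJ Hli.
pose M : 'M[R]_(k, #|J|) := \matrix_(j, i) v j (enum_val i).
have nf : ~~ row_free M.
  rewrite /row_free; apply/negP => /eqP eq.
  by move: (rank_leq_col M); rewrite eq leqNgt ltJ.
move: nf; rewrite -kermx_eq0 => /rowV0Pn [u /sub_kermxP uM unz].
have : forall j, u 0 j = 0.
  apply: Hli => i.
  case: (boolP (i \in J)) => iJ.
    have := congr1 (fun A : 'M_(1, #|J|) => A 0 (enum_rank_in iJ i)) uM.
    rewrite !mxE /= => E; rewrite -[RHS]E; apply: eq_bigr => j _.
    by rewrite mxE enum_rankK_in.
  by apply: big1 => j _; rewrite vJ // mulr0.
move=> u0; move/negP: unz; apply; apply/eqP/rowP => j.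
by rewrite mxE u0.
Qed.

Lemma indep_lemma (S : (I -> R) -> Prop) k (f : 'I_k -> I) (e : R) :
  injective f -> e != 0 -> S (fun _ => 0) ->
  (forall j, S (fun i => if i == f j then e else 0)) -> affdim_ge S k.
Proof.
move=> finj e0 S0 Sj.
exists (fun _ => 0), (fun j i => if i == f j then e else 0); split => //.
move=> c H j0; have := H (f j0).
rewrite (bigD1 j0) //= eqxx big1 ?addr0.
  by rewrite subr0 => /eqP; rewrite mulf_eq0 (negbTE e0) orbF => /eqP.
move=> j nj; rewrite subr0.
case: eqP => [/finj E|_]; last by rewrite mulr0.
by move: nj; rewrite E eqxx.
Qed.

End Lin.
Section Marked2.
Variables (R : realFieldType) (disp : Order.disp_t) (T : finPOrderType disp).
Variables (Pstar : {set T}) (lam : T -> R).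
Hypothesis strict : strict_marked Pstar lam.

Lemma eps_seq (l : seq (T * T)) : exists e : R, 0 < e /\
  forall ab, ab \in l -> ab.1 \in Pstar -> ab.2 \in Pstar -> (ab.1 < ab.2)%O ->
    e <= lam ab.2 - lam ab.1.
Proof.
elim: l => [|x l [e [e0 He]]]; first by exists 1; split.
case: (boolP [&& x.1 \in Pstar, x.2 \in Pstar & (x.1 < x.2)%O]).
  case/and3P => x1 x2 x12.
  have pos : 0 < lam x.2 - lam x.1 by rewrite subr_gt0; apply: strict.
  exists (Num.min e (lam x.2 - lam x.1)); split; first by rewrite lt_min e0 pos.
  move=> ab; rewrite inE => /orP [/eqP -> _ _ _|abl a1 a2 a12].
    by rewrite ge_min lexx orbT.
  by rewrite ge_min He.
move=> nx; exists e; split => // ab; rewrite inE => /orP [/eqP ->|abl]; last exact: He.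
by move=> a1 a2 a12; move: nx; rewrite a1 a2 a12.
Qed.

Lemma eps_ex : exists e : R, 0 < e /\
  forall a b, a \in Pstar -> b \in Pstar -> (a < b)%O -> e <= lam b - lam a.
Proof.
have [e [e0 He]] := eps_seq (enum [set: T * T]).
exists e; split => // a b Ha Hb Hab.
by apply: (He (a, b)); rewrite ?mem_enum ?inE.
Qed.

Lemma path_facts (a b : T) (s : seq (unmarked Pstar)) :
  path (@covers _ T) a (rcons (map val s) b) -> (a < b)%O /\ uniq s.
Proof.
move=> Hp.
have Hl : path (fun x y : T => (x < y)%O) a (rcons (map val s) b).
  by apply: sub_path Hp => x y /andP [].
split.
  have := order_path_min (@lt_trans _ _) Hl => /allP; apply.
  by rewrite mem_rcons inE eqxx.
have := path_sorted Hl => /(sorted_uniq (@lt_trans _ _) (@ltxx _ _)).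
by rewrite rcons_uniq => /andP [_ /map_uniq].
Qed.

Lemma sum_ind (s : seq (unmarked Pstar)) q (e : R) : 0 <= e -> uniq s ->
  \sum_(p <- s) (if p == q then e else 0) <= e.
Proof.
move=> e0; elim: s => [|x s IH]; first by rewrite big_nil.
rewrite big_cons /= => /andP [xs us]; case: eqP => [E|_]; last by rewrite add0r IH.
rewrite big1_seq ?addr0 // => y /andP [_ ys]; case: eqP => // E'.
by move: xs; rewrite E -E' ys.
Qed.

Lemma C0 : marked_chain_polytope Pstar lam (fun _ => 0).
Proof.
split=> // a b s Ha Hb /path_facts [ab _].
by rewrite big1 // subr_ge0 ltW // strict.
Qed.

Lemma Ce e q : 0 < e -> (forall a b, a \in Pstar -> b \in Pstar -> (a < b)%O -> e <= lam b - lam a) ->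
  marked_chain_polytope Pstar lam (fun i => if i == q then e else 0).
Proof.
move=> e0 He; split=> [p|a b s Ha Hb /path_facts [ab us]].
  by case: eqP => //; rewrite ltW.
by apply: le_trans (He _ _ Ha Hb ab); apply: sum_ind => //; rewrite ltW.
Qed.

End Marked2.

Theorem lemma4p3 (R : realFieldType) (disp : Order.disp_t)
  (T : finPOrderType disp) (Pstar : {set T}) (lam : T -> R) :
  marked_poset Pstar lam -> strict_marked Pstar lam -> irredundant Pstar lam ->
  (forall p : unmarked Pstar,
     is_facet (marked_chain_polytope Pstar lam)
              (fun x => marked_chain_polytope Pstar lam x /\ x p = 0)) /\
  is_vertex (marked_chain_polytope Pstar lam) (fun _ => 0).
Proof.
move=> _ strict _.
have [e [e0 He]] := @eps_ex R _ _ Pstar lam strict.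
have C0 := @C0 R _ _ Pstar lam strict.
have Ce := fun q => @Ce R _ _ Pstar lam e q e0 He.
split; last first.
  exists (fun _ => -1), 0; split.
    move=> x [x0 _]; under eq_bigr do rewrite mulN1r.
    by rewrite sumrN oppr_le0 sumr_ge0.
  move=> x; split=> [->|[[x0 Cx]]]; first by split => //; rewrite big1 // => i _; rewrite mulr0.
  under eq_bigr do rewrite mulN1r.
  rewrite sumrN => /eqP; rewrite oppr_eq0 => /eqP /psumr_eq0P H.
  by apply: functional_extensionality => i; apply: H.
move=> p.
have sum_p : forall x : unmarked Pstar -> R,
    \sum_i (if i == p then -1 else 0) * x i = - x p.
  move=> x; rewrite (bigD1 p) //= eqxx big1 ?addr0 ?mulN1r // => i /negbTE ->.
  by rewrite mul0r.
split.
  exists (fun i => if i == p then -1 else 0), 0; split.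
    by move=> x [x0 _]; rewrite sum_p oppr_le0.
  move=> x; rewrite sum_p; split=> [[Cx ->]|[Cx /eqP]]; first by rewrite oppr0.
  by rewrite oppr_eq0 => /eqP.
have n0 : (0 < #|{: unmarked Pstar}|)%N by apply/card_gt0P; exists p.
have Hn : (#|{: unmarked Pstar}|.-1).+1 = #|{: unmarked Pstar}| by rewrite prednK.
have Hd : #|{: unmarked Pstar}|.-1 = #|[set~ p]| by rewrite cardsC1.
exists (#|{: unmarked Pstar}|.-1); split; split.
- apply: (@indep_lemma _ _ _ _ (fun j => enum_val (cast_ord Hn j)) e) => //.
    by move=> j1 j2 /enum_val_inj /cast_ord_inj.
  by rewrite gt_eqF.
- move=> [x0 [y [_ _ Hli]]]; apply: (@dep_lemma _ _ _ _ setT _ _ Hli).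
    by rewrite cardsT -Hn.
  by move=> j i; rewrite inE.
- apply: (@indep_lemma _ _ _ _ (fun j => enum_val (cast_ord Hd j)) e) => //.
  + by move=> j1 j2 /enum_val_inj /cast_ord_inj.
  + by rewrite gt_eqF.
  + move=> j; split; first exact: Ce.
    have := enum_valP (cast_ord Hd j); rewrite in_setC1 eq_sym => /negbTE.
    by move=> ->.
- move=> [x0 [y [[_ x0p] Hy Hli]]]; apply: (@dep_lemma _ _ _ _ [set~ p] _ _ Hli).
    by rewrite -Hd.
  move=> j i; rewrite in_setC1 negbK => /eqP ->.
  by have [_ ->] := Hy j; rewrite x0p subr0.
Qed.
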